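(* Let $q\ge1$ and $t\ge 1$ be integers. If a code $\mathcal{C}\subseteq\mathcal{S}_{\mathrm{all}}^q$ is a $t$-tail-deletion-correcting code, then it is a $t$-tail-insertion-correcting code. However, the converse does not hold in general: there exist integers $q$ and $t\ge1$ and a code $\mathcal{C}\subseteq\mathcal{S}_{\mathrm{all}}^q$ that is $t$-tail-insertion-correcting but not $t$-tail-deletion-correcting.
   Context: Let $[q]=\{0,1,\dots,q-1\}$. For $1\le m\le q$, a partial permutation of length $m$ over $[q]$ is a sequence $\pi=(\pi_1,\dots,\pi_m)$ of $m$ pairwise distinct elements of $[q]$. Let $\mathcal{S}_m^q$ be the set of those of length $m$ and $\mathcal{S}_{\mathrm{all}}^q=\bigcup_{m=1}^{q}\mathcal{S}_m^q$. A code is any subset of $\mathcal{S}_{\mathrm{all}}^q$. Juxtaposition $\omega\pi$ denotes concatenation with $\omega$ on the left. Tail deletions: for $\pi$ of length $m$ and integer $j\ge 0$, $\pi_{\downarrow j}=(\pi_{k+1},\dots,\pi_m)$ with $k=\min(j,m-1)$ (leftmost symbols are deleted; the last symbol is never deleted); $\mathcal{B}_{\mathrm{del}}^t(\pi)=\{\pi_{\downarrow j}:0\le j\le t\}$. Tail insertions: $\mathcal{B}_{\mathrm{ins}}^t(\pi)$ is the set of all $\omega\pi\in\mathcal{S}_{\mathrm{all}}^q$ with $\omega$ a (possibly empty) sequence of at most $t$ elements of $[q]$. For $X\in\{\mathrm{del},\mathrm{ins}\}$, a code $\mathcal{C}$ is $t$-tail-$X$-correcting if $\mathcal{B}_X^t(\pi_1)\cap\mathcal{B}_X^t(\pi_2)=\emptyset$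 for all distinct $\pi_1,\pi_2\in\mathcal{C}$. *)

(* Defs.v *)
From mathcomp Require Import all_boot.
Set Implicit Arguments. Unset Strict Implicit. Unset Printing Implicit Defensive.

(* A partial permutation over [q] = {0,..,q-1}: a nonempty sequence of
   pairwise distinct elements of [q] (length automatically <= q). *)
Definition is_pperm (q : nat) (p : seq nat) : Prop :=
  [/\ 0 < size p, uniq p & all (fun x => x < q) p].

Definition is_code (q : nat) (C : seq nat -> Prop) : Prop :=
  forall p, C p -> is_pperm q p.

Definition tail_del (p : seq nat) (j : nat) : seq nat :=
  drop (minn j (size p).-1) p.

Definition ball_del (t : nat) (p : seq nat) (s : seq nat) : Prop :=
  exists j, j <= t /\ s = tail_del p j.

Definition ball_ins (q t : nat) (p : seq nat) (s : seq nat) : Prop :=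
  exists w : seq nat, [/\ size w <= t, all (fun x => x < q) w,
                          s = w ++ p & is_pperm q s].

Definition disjoint_balls (B : seq nat -> seq nat -> Prop) (C : seq nat -> Prop) : Prop :=
  forall p1 p2, C p1 -> C p2 -> p1 <> p2 -> forall s, ~ (B p1 s /\ B p2 s).

Definition tail_del_correcting (t : nat) (C : seq nat -> Prop) : Prop :=
  disjoint_balls (ball_del t) C.

Definition tail_ins_correcting (q t : nat) (C : seq nat -> Prop) : Prop :=
  disjoint_balls (ball_ins q t) C.

(* Main.v *)
Require Import Defs.
From mathcomp Require Import all_boot.
From mathcomp Require Import zify.

Lemma cat_drop_eq (w1 w2 p1 p2 : seq nat) :
  w1 ++ p1 = w2 ++ p2 -> size w1 <= size w2 ->
  p2 = drop (size w2 - size w1) p1.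
Proof.
move=> E le.
have := congr1 (drop (size w2)) E.
rewrite drop_cat ltnNge le /= drop_cat ltnn subnn drop0 => ->.
done.
Qed.

Lemma del_meet (t : nat) (p1 p2 : seq nat) (j : nat) :
  0 < size p2 -> j <= t -> p2 = drop j p1 ->
  ball_del t p1 p2 /\ ball_del t p2 p2.
Proof.
move=> s2 jt E; split.
- exists j; split => //; rewrite /tail_del.
  have : j <= (size p1).-1.
    move: s2; rewrite E size_drop; lia.
  by move=> h; rewrite (minn_idPl h).
- exists 0; split => //; rewrite /tail_del min0n drop0 //.
Qed.

Theorem mainTheorem4 :
  (forall (q t : nat) (C : seq nat -> Prop), 1 <= q -> 1 <= t ->
     is_code q C -> tail_del_correcting t C -> tail_ins_correcting q t C)
  /\
  (exists (q t : nat) (C : seq nat -> Prop), [/\ 1 <= q, 1 <= t, is_code q C,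
     tail_ins_correcting q t C & ~ tail_del_correcting t C]).
Proof.
split.
- move=> q t C _ _ HC HD p1 p2 C1 C2 ne s [[w1 [sw1 _ E1 _]] [w2 [sw2 _ E2 _]]].
  have E : w1 ++ p1 = w2 ++ p2 by rewrite -E1 -E2.
  case: (leqP (size w1) (size w2)) => le.
  + have D := cat_drop_eq _ _ _ _ E le.
    have [s2 _ _] := HC _ C2.
    have jt : size w2 - size w1 <= t by lia.
    have [B1 B2] := del_meet t p1 p2 (size w2 - size w1) s2 jt D.
    apply: (HD p1 p2 C1 C2 ne p2); split => //.
  + have D := cat_drop_eq _ _ _ _ (esym E) (ltnW le).
    have [s1 _ _] := HC _ C1.
    have jt : size w1 - size w2 <= t by lia.
    have [B1 B2] := del_meet t p2 p1 (size w1 - size w2) s1 jt D.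
    apply: (HD p1 p2 C1 C2 ne p1); split => //.
- exists 3, 1, (fun p => p = [:: 0; 1] \/ p = [:: 2; 1]); split => //.
  + by move=> p [->|->].
  + move=> p1 p2 C1 C2 ne s [[w1 [_ _ E1 _]] [w2 [_ _ E2 _]]].
    have E : w1 ++ p1 = w2 ++ p2 by rewrite -E1 -E2.
    have sz : size p1 = size p2 by case: C1 => ->; case: C2 => ->.
    have sw : size w1 = size w2.
      by have := congr1 size E; rewrite !size_cat sz; lia.
    have D := cat_drop_eq _ _ _ _ E (eq_leq sw).
    by apply: ne; rewrite D sw subnn drop0.
  + move=> HD; apply: (HD [:: 0; 1] [:: 2; 1] (or_introl erefl) (or_intror erefl) _ [:: 1]).
    * by [].
    * by split; exists 1.
Qed.
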